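(* Assume (H1), (H2) and the sequence setting (Seq). Let $x\in\mathrm{dom}\,J$, and for each $k$ let $(\bar u_{1,k},\dots,\bar u_{N,k})$ be any minimizer of the Lax problem at the point $(x_k,t_{1,k},\dots,t_{N,k})$. Then: (i) $\lim_{k\to\infty}\bar u_{j,k}=0$ for every $j=1,\dots,N$; (ii) if $\partial J(x)\ne\emptyset$ and $\alpha_{j,\infty}=0$, then $\lim_{k\to\infty}\bar u_{j,k}/t_{1,k}=0$; (iii) if $\partial J(x)\ne\emptyset$ and $\alpha_{j,\infty}\ne0$, then the sequence $(\bar u_{j,k}/t_{j,k})_k$ is bounded.
   Context: Hypothesis (H1): each $H_j:\mathbb{R}^n\to\mathbb{R}$ ($j=1,\dots,N$) is finite-valued, convex and 1-coercive (i.e. $H_j(p)/\|p\|\to+\infty$ as $\|p\|\to\infty$), and at least one $H_j$ is strictly convex. Hypothesis (H2): $J:\mathbb{R}^n\to\mathbb{R}\cup\{+\infty\}$ is proper, convex and lower semicontinuous. $H_j^*$ is the Legendre transform of $H_j$. The Lax problem at $(y,t_1,\dots,t_N)$ with all $t_j>0$ is: minimize $J(y-\sum_{j=1}^N u_j)+\sum_{j=1}^N t_jH_j^*(u_j/t_j)$ over $u_1,\dots,u_N\in\mathbb{R}^n$ (minimizers exist under (H1)-(H2)). Sequence setting (Seq): $x\in\mathbb{R}^n$; for each $j\in\{1,\dots,N\}$ and $k\in\mathbb{N}$, $t_{j,k}>0$ and $v_{j,k}\in\mathbb{R}^n$, with $t_{j,k}\to0$, $v_{j,k}\to v_{j,\infty}\in\mathbb{R}^n$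 and $t_{j,k}/t_{1,k}\to\alpha_{j,\infty}\in\mathbb{R}$ as $k\to\infty$; and $x_k=x+\sum_{j=1}^N t_{j,k}v_{j,k}$. *)

(* Defs.v *)
From mathcomp Require Import ssreflect ssrbool ssrfun eqtype ssrnat seq fintype bigop.
From Stdlib Require Import Reals ClassicalEpsilon.
Set Implicit Arguments.
Unset Strict Implicit.
Local Open Scope R_scope.

Definition vec (n : nat) := 'I_n -> R.
Definition vzero {n} : vec n := fun _ => 0.
Definition vadd {n} (u v : vec n) : vec n := fun i => u i + v i.
Definition vsub {n} (u v : vec n) : vec n := fun i => u i - v i.
Definition vscale {n} (a : R) (u : vec n) : vec n := fun i => a * u i.
Definition dot {n} (u v : vec n) : R := \big[Rplus/0]_(i < n) (u i * v i).
Definition vnorm {n} (u : vec n) : R := sqrt (dot u u).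
Definition vsum {n m} (F : 'I_m -> vec n) : vec n :=
  fun i => \big[Rplus/0]_(j < m) (F j i).

Definition vec_cv {n} (s : nat -> vec n) (l : vec n) : Prop :=
  Un_cv (fun k => vnorm (vsub (s k) l)) 0.
Definition vec_bounded {n} (s : nat -> vec n) : Prop :=
  exists M : R, forall k, vnorm (s k) <= M.

(* Extended reals R ∪ {+oo}: None = +oo. *)
Definition ereal := option R.
Definition eadd (a b : ereal) : ereal :=
  match a, b with Some x, Some y => Some (x + y) | _, _ => None end.
Definition ele (a b : ereal) : Prop :=
  match a, b with
  | _, None => True
  | None, Some _ => False
  | Some x, Some y => x <= y
  end.
Definition escale (t : R) (a : ereal) : ereal :=
  match a with Some x => Some (t * x) | None => None end.
Definition esum {m} (F : 'I_m -> ereal) : ereal := \big[eadd/Some 0]_(j < m) F j.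

Definition convex_fun {n} (H : vec n -> R) : Prop :=
  forall (x y : vec n) (l : R), 0 <= l <= 1 ->
    H (vadd (vscale l x) (vscale (1 - l) y)) <= l * H x + (1 - l) * H y.
Definition strictly_convex_fun {n} (H : vec n -> R) : Prop :=
  forall (x y : vec n) (l : R), x <> y -> 0 < l < 1 ->
    H (vadd (vscale l x) (vscale (1 - l) y)) < l * H x + (1 - l) * H y.
(* 1-coercive: H(p)/||p|| -> +oo as ||p|| -> oo *)
Definition one_coercive {n} (H : vec n -> R) : Prop :=
  forall M : R, exists r : R, forall p : vec n, r <= vnorm p -> M * vnorm p <= H p.

Definition proper_fun {n} (J : vec n -> ereal) : Prop := exists x, J x <> None.
Definition convex_efun {n} (J : vec n -> ereal) : Prop :=
  forall (x y : vec n) (l : R), 0 <= l <= 1 ->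
    ele (J (vadd (vscale l x) (vscale (1 - l) y)))
        (eadd (escale l (J x)) (escale (1 - l) (J y))).
Definition lsc_efun {n} (J : vec n -> ereal) : Prop :=
  forall (x : vec n) (c : R), ~ ele (J x) (Some c) ->
    exists d : R, 0 < d /\ forall y, vnorm (vsub y x) < d -> ~ ele (J y) (Some c).

Definition dom {n} (J : vec n -> ereal) (x : vec n) : Prop := J x <> None.

Definition subgrad {n} (J : vec n -> ereal) (x p : vec n) : Prop :=
  exists jx : R, J x = Some jx /\
    forall y, ele (Some (jx + dot p (vsub y x))) (J y).
Definition subdiff_nonempty {n} (J : vec n -> ereal) (x : vec n) : Prop :=
  exists p, subgrad J x p.

(* Legendre transform H^*(v) = sup_p (<v,p> - H p), as an extended real *)
Definition legendre_set {n} (H : vec n -> R) (v : vec n) : R -> Prop :=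
  fun r => exists p : vec n, r = dot v p - H p.
Lemma legendre_set_ne {n} (H : vec n -> R) (v : vec n) :
  exists r, legendre_set H v r.
Proof. exists (dot v vzero - H vzero); exists vzero; reflexivity. Qed.
Definition legendre {n} (H : vec n -> R) (v : vec n) : ereal :=
  match excluded_middle_informative (bound (legendre_set H v)) with
  | left hb => Some (proj1_sig (completeness _ hb (legendre_set_ne H v)))
  | right _ => None
  end.

Definition lax_obj {n m} (J : vec n -> ereal) (H : 'I_m -> vec n -> R)
  (y : vec n) (t : 'I_m -> R) (u : 'I_m -> vec n) : ereal :=
  eadd (J (vsub y (vsum u)))
       (esum (fun j => escale (t j) (legendre (H j) (vscale (/ t j) (u j))))).
Definition lax_minimizer {n m} (J : vec n -> ereal) (H : 'I_m -> vec n -> R)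
  (y : vec n) (t : 'I_m -> R) (u : 'I_m -> vec n) : Prop :=
  forall w : 'I_m -> vec n, ele (lax_obj J H y t u) (lax_obj J H y t w).

(* Main.v *)
Require Import Defs.
From HB Require Import structures.
From mathcomp Require Import ssreflect ssrbool ssrfun eqtype ssrnat seq fintype bigop.
From Stdlib Require Import Reals Lra Psatz FunctionalExtensionality ClassicalEpsilon.
Local Open Scope R_scope.
Set Warnings "-redundant-canonical-projection".
Set Implicit Arguments.
Unset Strict Implicit.

Lemma RplusA : associative Rplus. Proof. move=> x y z; ring. Qed.
HB.instance Definition _ := Monoid.isComLaw.Build R 0 Rplus RplusA Rplus_comm Rplus_0_l.
Lemma RmultA : associative Rmult. Proof. move=> x y z; ring. Qed.
HB.instance Definition _ := Monoid.isComLaw.Build R 1 Rmult RmultA Rmult_comm Rmult_1_l.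
Lemma Rmult0r : left_zero 0 Rmult. Proof. move=> x; ring. Qed.
Lemma Rmultr0 : right_zero 0 Rmult. Proof. move=> x; ring. Qed.
HB.instance Definition _ := Monoid.isMulLaw.Build R 0 Rmult Rmult0r Rmultr0.
Lemma RmultDl : left_distributive Rmult Rplus. Proof. move=> x y z; ring. Qed.
Lemma RmultDr : right_distributive Rmult Rplus. Proof. move=> x y z; ring. Qed.
HB.instance Definition _ := Monoid.isAddLaw.Build R Rmult Rplus RmultDl RmultDr.

Notation "\rsum_ ( i < m ) F" := (\big[Rplus/0]_(i < m) F)
  (at level 41, F at level 36, i, m at level 50).

Lemma sumD m (F G : 'I_m -> R) : \rsum_(i < m) (F i + G i) = \rsum_(i < m) F i + \rsum_(i < m) G i.
Proof. by rewrite big_split. Qed.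
Lemma sumB m (F G : 'I_m -> R) : \rsum_(i < m) (F i - G i) = \rsum_(i < m) F i - \rsum_(i < m) G i.
Proof.
have -> : \rsum_(i < m) (F i - G i) = \rsum_(i < m) (F i + (-1) * G i).
  by apply: eq_bigr => i _; ring.
rewrite big_split /= -big_distrr /=; ring.
Qed.
Lemma sumZ m (F : 'I_m -> R) c : \rsum_(i < m) (c * F i) = c * \rsum_(i < m) F i.
Proof. by rewrite big_distrr. Qed.
Lemma sumZr m (F : 'I_m -> R) c : \rsum_(i < m) (F i * c) = \rsum_(i < m) F i * c.
Proof. by rewrite big_distrl. Qed.
Lemma sum_le m (F G : 'I_m -> R) : (forall i, F i <= G i) -> \rsum_(i < m) F i <= \rsum_(i < m) G i.
Proof.
move=> h; apply: (big_ind2 (fun a b => a <= b)) => //; [lra| move=> *; lra].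
Qed.
Lemma sum_ge0 m (F : 'I_m -> R) : (forall i, 0 <= F i) -> 0 <= \rsum_(i < m) F i.
Proof. move=> h; apply: (big_ind (fun a => 0 <= a)) => //; [lra| move=> *; lra]. Qed.
Lemma sum_term_le m (F : 'I_m -> R) j : (forall i, 0 <= F i) -> F j <= \rsum_(i < m) F i.
Proof.
move=> h; rewrite (bigD1 j) //=.
set s := (X in Rplus (F j) X).
have : 0 <= s by apply: (big_ind (fun a => 0 <= a)) => //; [lra| move=> *; lra].
lra.
Qed.
Lemma sum_pred1 m (F : 'I_m -> R) j :
  \rsum_(i < m) (if i == j then F i else 0) = F j.
Proof. by rewrite -big_mkcond big_pred1_eq. Qed.
Lemma sum_cv m (f : 'I_m -> nat -> R) (l : 'I_m -> R) :
  (forall i, Un_cv (f i) (l i)) -> Un_cv (fun k => \rsum_(i < m) f i k) (\rsum_(i < m) l i).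
Proof.
elim: m f l => [|m IH] f l h.
  rewrite big_ord0. move=> e he; exists 0%nat => k _. rewrite big_ord0 /R_dist.
  rewrite Rminus_0_r Rabs_R0; lra.
rewrite big_ord_recr /=.
have -> : (fun k => \rsum_(i < m.+1) f i k) =
  (fun k => \rsum_(i < m) f (widen_ord (leqnSn m) i) k + f ord_max k).
  by apply: functional_extensionality => k; rewrite big_ord_recr.
apply: CV_plus; last exact: h.
apply: (IH (fun i => f (widen_ord (leqnSn m) i))) => i; exact: h.
Qed.
Lemma cv_const c : Un_cv (fun _ => c) c.
Proof. move=> e he; exists 0%nat => k _; rewrite /R_dist Rminus_diag_eq // Rabs_R0; lra. Qed.

Lemma dot_sym n (u v : vec n) : dot u v = dot v u.
Proof. rewrite /dot; apply: eq_bigr => i _; ring. Qed.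
Lemma dot_lin n (a b : R) (u w v : vec n) :
  dot (vadd (vscale a u) (vscale b w)) v = a * dot u v + b * dot w v.
Proof.
rewrite /dot -!sumZ -sumD; apply: eq_bigr => i _ /=.
rewrite /vadd /vscale; ring.
Qed.
Lemma dot_ge0 n (u : vec n) : 0 <= dot u u.
Proof. apply: sum_ge0 => i; nra. Qed.
Lemma vnorm_ge0 n (u : vec n) : 0 <= vnorm u.
Proof. exact: sqrt_pos. Qed.
Lemma vnorm_sq n (u : vec n) : vnorm u * vnorm u = dot u u.
Proof. by rewrite /vnorm sqrt_sqrt //; apply: dot_ge0. Qed.

Lemma dot_linr n (a b : R) (u w v : vec n) :
  dot v (vadd (vscale a u) (vscale b w)) = a * dot v u + b * dot v w.
Proof. by rewrite dot_sym dot_lin (dot_sym u) (dot_sym w). Qed.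

Lemma dot_quad n (a b : R) (u v : vec n) :
  0 <= a * a * dot u u + 2 * a * b * dot u v + b * b * dot v v.
Proof.
have h := dot_ge0 (vadd (vscale a u) (vscale b v)).
rewrite dot_lin !dot_linr (dot_sym v u) in h. nra.
Qed.

Lemma dot_add n (u w v : vec n) : dot (vadd u w) v = dot u v + dot w v.
Proof. by rewrite /dot -sumD; apply: eq_bigr => i _; rewrite /vadd; ring. Qed.
Lemma dot_addr n (u w v : vec n) : dot v (vadd u w) = dot v u + dot v w.
Proof. by rewrite dot_sym dot_add (dot_sym u) (dot_sym w). Qed.
Lemma dot_scale n a (u v : vec n) : dot (vscale a u) v = a * dot u v.
Proof. by rewrite /dot -sumZ; apply: eq_bigr => i _; rewrite /vscale; ring. Qed.
Lemma dot_scaler n a (u v : vec n) : dot u (vscale a v) = a * dot u v.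
Proof. by rewrite dot_sym dot_scale dot_sym. Qed.

Lemma cs n (u v : vec n) : Rabs (dot u v) <= vnorm u * vnorm v.
Proof.
have hP := dot_ge0 u; have hQ := dot_ge0 v.
have key : dot u v * dot u v <= dot u u * dot v v.
  case: (Rle_lt_or_eq_dec 0 (dot v v) hQ) => hq.
    have h := dot_quad (dot v v) (- dot u v) u v. nra.
  case: (Req_dec (dot u v) 0) => hd; first by rewrite hd; nra.
  have h := dot_quad 1 (- (dot u u + 1) / dot u v) u v.
  rewrite -hq in h.
  have : 2 * 1 * (- (dot u u + 1) / dot u v) * dot u v = - 2 * (dot u u + 1).
    by field.
  nra.
rewrite -!vnorm_sq in key.
have h1 := vnorm_ge0 u; have h2 := vnorm_ge0 v.
have hN : 0 <= vnorm u * vnorm v by apply: Rmult_le_pos.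
have key' : dot u v * dot u v <= (vnorm u * vnorm v) * (vnorm u * vnorm v).
  by rewrite -[X in _ <= X]/(_) ; nra.
move: hN key'; set N := vnorm u * vnorm v; set d := dot u v => hN key'.
apply: Rabs_le; split; nra.
Qed.
Lemma dot_le n (u v : vec n) : dot u v <= vnorm u * vnorm v.
Proof. have := cs u v; have := Rle_abs (dot u v); lra. Qed.

Lemma vnorm_add n (u v : vec n) : vnorm (vadd u v) <= vnorm u + vnorm v.
Proof.
have h := dot_le u v.
have h1 := vnorm_ge0 u; have h2 := vnorm_ge0 v.
rewrite {1}/vnorm -(sqrt_square (vnorm u + vnorm v)); last lra.
apply: sqrt_le_1_alt.
rewrite dot_add !dot_addr (dot_sym v u) -!vnorm_sq. nra.
Qed.
Lemma vnorm_scale n a (u : vec n) : vnorm (vscale a u) = Rabs a * vnorm u.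
Proof.
rewrite /vnorm dot_scale dot_scaler -Rmult_assoc sqrt_mult_alt; last nra.
by rewrite -sqrt_Rsqr_abs.
Qed.
Lemma vnorm_zero n : vnorm (@vzero n) = 0.
Proof.
rewrite /vnorm /dot /vzero (eq_bigr (fun _ => 0)); last by move=> i _; ring.
by rewrite big1_eq sqrt_0.
Qed.
Lemma coord_le n (u : vec n) i : Rabs (u i) <= vnorm u.
Proof.
rewrite -sqrt_Rsqr_abs /Rsqr; apply: sqrt_le_1_alt.
rewrite /dot; apply: (sum_term_le (F := fun i => u i * u i)) => j; nra.
Qed.
Lemma vsub_eq n (u v : vec n) : vsub u v = vadd u (vscale (-1) v).
Proof. apply: functional_extensionality => i; rewrite /vsub /vadd /vscale; ring. Qed.
Lemma vnorm_sub n (u v : vec n) : vnorm (vsub u v) <= vnorm u + vnorm v.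
Proof.
rewrite vsub_eq; apply: Rle_trans (vnorm_add _ _) _.
rewrite vnorm_scale Rabs_Ropp Rabs_R1; lra.
Qed.
Lemma vnorm_sub_sym n (u v : vec n) : vnorm (vsub u v) = vnorm (vsub v u).
Proof.
have -> : vsub u v = vscale (-1) (vsub v u).
  apply: functional_extensionality => i; rewrite /vsub /vscale; ring.
by rewrite vnorm_scale Rabs_Ropp Rabs_R1 Rmult_1_l.
Qed.
Lemma vsub_zero n (u : vec n) : vsub u vzero = u.
Proof. apply: functional_extensionality => i; rewrite /vsub /vzero; ring. Qed.

Lemma vsum_norm n m (F : 'I_m -> vec n) : vnorm (vsum F) <= \rsum_(j < m) vnorm (F j).
Proof.
elim: m F => [|m IH] F.
  rewrite big_ord0.
  have -> : vsum F = vzero by apply: functional_extensionality => i; rewrite /vsum big_ord0.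
  rewrite vnorm_zero; lra.
have -> : vsum F = vadd (vsum (fun j => F (widen_ord (leqnSn m) j))) (F ord_max).
  by apply: functional_extensionality => i; rewrite /vsum /vadd big_ord_recr.
rewrite big_ord_recr /=.
apply: Rle_trans (vnorm_add _ _) _.
apply: Rplus_le_compat_r; exact: IH.
Qed.
Lemma vsum_sub n m (F G : 'I_m -> vec n) :
  vsum (fun j => vsub (F j) (G j)) = vsub (vsum F) (vsum G).
Proof.
apply: functional_extensionality => i; rewrite /vsum /vsub.
exact: (sumB (fun j => F j i) (fun j => G j i)).
Qed.

Definition rsum m (F : 'I_m -> R) : R := \big[Rplus/0]_(i < m) F i.
Lemma rsumD m (F G : 'I_m -> R) : rsum (fun i => F i + G i) = rsum F + rsum G.
Proof. exact: sumD. Qed.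
Lemma rsumB m (F G : 'I_m -> R) : rsum (fun i => F i - G i) = rsum F - rsum G.
Proof. exact: sumB. Qed.
Lemma rsumZ m (F : 'I_m -> R) c : rsum (fun i => c * F i) = c * rsum F.
Proof. exact: sumZ. Qed.
Lemma rsumZr m (F : 'I_m -> R) c : rsum (fun i => F i * c) = rsum F * c.
Proof. exact: sumZr. Qed.
Lemma rsum_le m (F G : 'I_m -> R) : (forall i, F i <= G i) -> rsum F <= rsum G.
Proof. exact: sum_le. Qed.
Lemma rsum_ge0 m (F : 'I_m -> R) : (forall i, 0 <= F i) -> 0 <= rsum F.
Proof. exact: sum_ge0. Qed.
Lemma rsum_term_le m (F : 'I_m -> R) j : (forall i, 0 <= F i) -> F j <= rsum F.
Proof. exact: sum_term_le. Qed.
Lemma rsum_pred1 m (F : 'I_m -> R) j :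
  rsum (fun i => if i == j then F i else 0) = F j.
Proof. exact: sum_pred1. Qed.
Lemma rsum_cv m (f : 'I_m -> nat -> R) (l : 'I_m -> R) :
  (forall i, Un_cv (f i) (l i)) -> Un_cv (fun k => rsum (fun i => f i k)) (rsum l).
Proof. exact: sum_cv. Qed.
Lemma rsum_ext m (F G : 'I_m -> R) : (forall i, F i = G i) -> rsum F = rsum G.
Proof. by move=> h; apply: eq_bigr => i _. Qed.
Lemma rsum0 m : rsum (fun _ : 'I_m => 0) = 0.
Proof. exact: big1_eq. Qed.
Lemma vsum_rnorm n m (F : 'I_m -> vec n) : vnorm (vsum F) <= rsum (fun j => vnorm (F j)).
Proof. exact: vsum_norm. Qed.


Lemma line_bound (n : nat) (H : vec n -> R) (Hc : convex_fun H) (e : vec n) a s : 0 < a -> Rabs s <= a ->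
  H (vscale s e) <= Rabs (H (vscale a e)) + Rabs (H (vscale (-a) e)).
Proof.
move=> ha hs.
have hs' : - a <= s <= a by have := Rle_abs s; have := Rle_abs (- s); rewrite Rabs_Ropp; lra.
set l := (s + a) / (2 * a).
have hl : 0 <= l <= 1.
  rewrite /l; split.
    apply: Rmult_le_pos; [lra| apply/Rlt_le/Rinv_0_lt_compat; lra].
  apply: (Rmult_le_reg_r (2 * a)); first lra.
  rewrite /Rdiv Rmult_assoc Rinv_l; lra.
have -> : vscale s e = vadd (vscale l (vscale a e)) (vscale (1 - l) (vscale (-a) e)).
  apply: functional_extensionality => i; rewrite /vadd /vscale /l; field; lra.
apply: Rle_trans (@Hc _ _ _ hl) _.
have := Rle_abs (H (vscale a e)); have := Rle_abs (H (vscale (-a) e)).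
have := Rabs_pos (H (vscale a e)); have := Rabs_pos (H (vscale (-a) e)).
set A1 := Rabs _; set A2 := Rabs _; set h1 := H _; set h2 := H _.
move=> *. nra.
Qed.

Lemma cube_bound (n : nat) (H : vec n -> R) (Hc : convex_fun H) (k : nat) : forall rho, exists B, forall p : vec n,
  (forall i, Rabs (p i) <= rho) -> (forall i : 'I_n, leq k i -> p i = 0) -> H p <= B.
Proof.
elim: k => [|k IH] rho.
  exists (H vzero) => p _ hp.
  have -> : p = vzero by apply: functional_extensionality => i; apply: hp.
  lra.
have [B1 hB1] := IH (2 * Rabs rho).
set e : vec n := fun i => if (nat_of_ord i == k) then 1 else 0.
set a := 2 * Rabs rho + 1.
have ha : 0 < a by have := Rabs_pos rho; rewrite /a; lra.
exists (/2 * B1 + (1 - /2) * (Rabs (H (vscale a e)) + Rabs (H (vscale (-a) e)))).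
move=> p hp hsupp.
set p' : vec n := fun i => if leq (S i) k then p i else 0.
set q : vec n := fun i => if (nat_of_ord i == k) then p i else 0.
have hrho : forall i, Rabs (p i) <= Rabs rho.
  move=> i; apply: Rle_trans (hp i) (Rle_abs _).
have -> : p = vadd (vscale (/2) (vscale 2 p')) (vscale (1 - /2) (vscale 2 q)).
  apply: functional_extensionality => i; rewrite /vadd /vscale /p' /q.
  case: ltngtP => hik.
  - field.
  - rewrite hsupp //; field.
  - field.
have h2 : 0 <= /2 <= 1 by lra.
apply: Rle_trans (@Hc _ _ _ h2) _.
apply: Rplus_le_compat.
  apply: Rmult_le_compat_l; first lra.
  apply: hB1.
    move=> i; rewrite /vscale /p'; case: (leq (S i) k).
      rewrite Rabs_mult Rabs_pos_eq; [have := hrho i; lra | lra].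
    rewrite Rmult_0_r Rabs_R0; have := Rabs_pos rho; lra.
  move=> i hi; rewrite /vscale /p' ltnNge hi /=; ring.
apply: Rmult_le_compat_l; first lra.
have [s [hs hsq]] : exists s, Rabs s <= 2 * Rabs rho /\ vscale 2 q = vscale s e.
  case: (ltnP k n) => hk.
    exists (2 * p (Ordinal hk)); split.
      rewrite Rabs_mult Rabs_pos_eq; [have := hrho (Ordinal hk); lra | lra].
    apply: functional_extensionality => i; rewrite /vscale /q /e.
    case: eqP => E; last by ring.
    have -> : i = Ordinal hk by apply: val_inj.
    ring.
  exists 0; split; first by rewrite Rabs_R0; have := Rabs_pos rho; lra.
  apply: functional_extensionality => i; rewrite /vscale /q /e.
  case: eqP => E; last by ring.
  have := ltn_ord i; rewrite E => /(leq_trans) /(_ hk); rewrite ltnn.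
  done.
rewrite hsq; apply: (line_bound Hc) => //; rewrite /a; lra.
Qed.

Lemma ball_bound (n : nat) (H : vec n -> R) (Hc : convex_fun H) r : exists B, forall p, vnorm p <= r -> H p <= B.
Proof.
have [B hB] := cube_bound Hc n r.
exists B => p hp; apply: hB.
  move=> i; apply: Rle_trans (coord_le p i) hp.
move=> i; by rewrite leqNgt ltn_ord.
Qed.

Lemma H_zero_le (n : nat) (H : vec n -> R) (Hc : convex_fun H) (p : vec n) : H vzero <= /2 * H p + /2 * H (vscale (-1) p).
Proof.
have h2 : 0 <= /2 <= 1 by lra.
have := @Hc p (vscale (-1) p) _ h2.
have -> : vadd (vscale (/2) p) (vscale (1 - /2) (vscale (-1) p)) = vzero.
  apply: functional_extensionality => i; rewrite /vadd /vscale /vzero; field.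
have -> : 1 - /2 = /2 by field.
done.
Qed.


Lemma conj_bound (n : nat) (H : vec n -> R) (Hc : convex_fun H) (Hco : one_coercive H) b : exists C, forall v p, vnorm v <= b -> dot v p - H p <= C.
Proof.
have [r0 hr0] := Hco b.
have [B hB] := ball_bound Hc (Rabs r0).
exists (Rmax 0 (b * Rabs r0 - 2 * H vzero + B)) => v p hv.
have hb : 0 <= b by have := vnorm_ge0 v; lra.
have hd := dot_le v p.
have hnp := vnorm_ge0 p.
have hvp : vnorm v * vnorm p <= b * vnorm p by apply: Rmult_le_compat_r.
case: (Rle_lt_dec r0 (vnorm p)) => hp.
  have := hr0 p hp. have := Rmax_l 0 (b * Rabs r0 - 2 * H vzero + B). lra.
have hHm : H (vscale (-1) p) <= B.
  apply: hB; rewrite vnorm_scale Rabs_Ropp Rabs_R1 Rmult_1_l.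
  have := Rle_abs r0; lra.
have h0 := H_zero_le Hc p.
have : b * vnorm p <= b * Rabs r0.
  apply: Rmult_le_compat_l => //; have := Rle_abs r0; lra.
have := Rmax_r 0 (b * Rabs r0 - 2 * H vzero + B).
lra.
Qed.

Definition hs (n : nat) (H : vec n -> R) (v : vec n) : R :=
  match legendre H v with Some s => s | None => 0 end.

Lemma hs_spec (n : nat) (H : vec n -> R) (Hc : convex_fun H) (Hco : one_coercive H) v : legendre H v = Some (hs H v) /\
  (forall p, dot v p - H p <= hs H v) /\
  (forall m, (forall p, dot v p - H p <= m) -> hs H v <= m).
Proof.
have hb : bound (legendre_set H v).
  have [C hC] := conj_bound Hc Hco (vnorm v).
  exists C => r [p ->]; apply: hC; lra.
rewrite /hs /legendre.
case: (excluded_middle_informative _) => [hb'|//].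
case: (completeness _ _ _) => s [h1 h2] /=.
split => //; split.
  move=> p; apply: h1; by exists p.
move=> m hm; apply: h2 => r [p ->]; exact: hm.
Qed.

Lemma hs_upper (n : nat) (H : vec n -> R) (Hc : convex_fun H) (Hco : one_coercive H) b : exists C, forall v, vnorm v <= b -> hs H v <= C.
Proof.
have [C hC] := conj_bound Hc Hco b.
exists C => v hv; have [_ [_ h]] := hs_spec Hc Hco v; apply: h => p; exact: hC.
Qed.

Lemma hs_lower (n : nat) (H : vec n -> R) (Hc : convex_fun H) (Hco : one_coercive H) M B w : 0 <= M -> (forall p, vnorm p <= M -> H p <= B) ->
  M * vnorm w - B <= hs H w.
Proof.
move=> hM hB.
have [_ [h _]] := hs_spec Hc Hco w.
case: (Rle_lt_or_eq_dec 0 (vnorm w) (vnorm_ge0 w)) => hw.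
  set p := vscale (M / vnorm w) w.
  have hp : vnorm p = M.
    rewrite /p vnorm_scale Rabs_pos_eq; last first.
      apply: Rmult_le_pos => //; apply/Rlt_le/Rinv_0_lt_compat => //.
    by field; lra.
  have hdot : dot w p = M * vnorm w.
    rewrite /p dot_scaler -vnorm_sq; field; lra.
  have := h p; have := hB p (Req_le _ _ hp); lra.
have hz : dot w vzero = 0.
  have -> : (vzero : vec n) = vscale 0 w.
    apply: functional_extensionality => i; rewrite /vscale /vzero; ring.
  rewrite dot_scaler; ring.
have := h vzero; have := hB vzero; rewrite vnorm_zero -hw hz.
move=> h1 h2; have := h1 hM; lra.
Qed.

Lemma esum_some m (F : 'I_m -> R) : esum (fun j => Some (F j)) = Some (rsum F).
Proof.
rewrite /esum; apply: esym; apply: (big_morph Some) => //.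
Qed.

Lemma J_minor n (J : vec n -> ereal) x jx : convex_efun J -> lsc_efun J -> J x = Some jx ->
  exists A L, 0 <= A /\ 0 <= L /\
    forall y jy, J y = Some jy -> jx - A - L * vnorm (vsub y x) <= jy.
Proof.
move=> hc hl hx.
have [d [hd hball]] : exists d, 0 < d /\ forall y, vnorm (vsub y x) < d -> ~ ele (J y) (Some (jx - 1)).
  apply: hl; rewrite hx /=; lra.
exists 1, (2 / d); split; first lra; split.
  apply: Rmult_le_pos; [lra | apply/Rlt_le/Rinv_0_lt_compat => //].
move=> y jy hy.
have hLD : 0 <= 2 / d * vnorm (vsub y x).
  apply: Rmult_le_pos; [apply: Rmult_le_pos; [lra | apply/Rlt_le/Rinv_0_lt_compat => //] | apply: vnorm_ge0].
case: (Rlt_le_dec (vnorm (vsub y x)) d) => hyd.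
  have := hball y hyd; rewrite hy /= => h; lra.
move: hyd hLD; set D := vnorm (vsub y x) => hyd hLD.
have hD : 0 < D by lra.
set l := d / (2 * D).
have hl0 : 0 < l by rewrite /l; apply: Rdiv_lt_0_compat; lra.
have hl1 : l <= 1.
  rewrite /l; apply: (Rmult_le_reg_r (2 * D)); first lra.
  rewrite /Rdiv Rmult_assoc Rinv_l; lra.
set z := vadd (vscale l y) (vscale (1 - l) x).
have hz : vnorm (vsub z x) < d.
  have -> : vsub z x = vscale l (vsub y x).
    apply: functional_extensionality => i; rewrite /z /vsub /vadd /vscale; ring.
  rewrite vnorm_scale Rabs_pos_eq; last lra.
  rewrite -/D /l; field_simplify; lra.
have hcz := hc y x l (conj (Rlt_le _ _ hl0) hl1).
have hnz := hball z hz.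
rewrite -/z hy hx /= in hcz.
move: hcz hnz; case: (J z) => [jz|] //= h1 h2.
have h3 : jx - 1 < jz by lra.
have h4 : l * (jy - jx) > -1 by lra.
have h5 : l * (2 / d * D) = 1 by rewrite /l; field; lra.
have : l * (jy - jx + 2 / d * D) > 0 by lra.
move=> h6.
have : jy - jx + 2 / d * D > 0.
  case: (Rlt_le_dec 0 (jy - jx + 2 / d * D)) => // h7.
  have : l * (jy - jx + 2 / d * D) <= 0 by nra.
  lra.
lra.
Qed.

Lemma J_minor_sub n (J : vec n -> ereal) x jx p : J x = Some jx -> subgrad J x p ->
  forall y jy, J y = Some jy -> jx - 0 - vnorm p * vnorm (vsub y x) <= jy.
Proof.
move=> hx [jx' [hx' h]] y jy hy.
rewrite hx in hx'; case: hx' => e; subst jx'.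
have := h y; rewrite hy /= => h1.
have := cs p (vsub y x); have := Rle_abs (- dot p (vsub y x)); rewrite Rabs_Ropp.
lra.
Qed.

Lemma inv_bounded (a : nat -> R) l : Un_cv a l -> l <> 0 -> (forall k, a k <> 0) ->
  exists B, forall k, Rabs (/ a k) <= B.
Proof.
move=> ha hl hnz.
have hl' : 0 < Rabs l by apply: Rabs_pos_lt.
have [N0 hN0] := ha (Rabs l / 2) ltac:(lra).
exists (2 / Rabs l + \rsum_(m < N0) Rabs (/ a m)) => k.
have hs : 0 <= \rsum_(m < N0) Rabs (/ a m) by apply: sum_ge0 => m; apply: Rabs_pos.
case: (ltnP k N0) => hk.
  have := sum_term_le (F := fun m : 'I_N0 => Rabs (/ a m)) (Ordinal hk) (fun m => Rabs_pos _).
  have : 0 <= 2 / Rabs l by apply: Rlt_le; apply: Rdiv_lt_0_compat; lra.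
  simpl; lra.
have := hN0 k (elimT leP hk); rewrite /Rdist => h.
have ht := Rabs_triang (l - a k) (a k).
rewrite Rabs_minus_sym in h.
have e : l - a k + a k = l by ring.
rewrite e in ht.
have hak : Rabs l / 2 <= Rabs (a k) by lra.
rewrite Rabs_inv.
have : / Rabs (a k) <= / (Rabs l / 2) by apply: Rinv_le_contravar; lra.
have -> : / (Rabs l / 2) = 2 / Rabs l by field; lra.
lra.
Qed.

Unset Implicit Arguments.
Set Strict Implicit.

Theorem proposition3p3 (n N : nat)
  (H : 'I_N.+1 -> vec n -> R) (J : vec n -> ereal)
  (HH_conv : forall j, convex_fun (H j))
  (HH_coer : forall j, one_coercive (H j))
  (HH_strict : exists j, strictly_convex_fun (H j))
  (HJ_proper : proper_fun J) (HJ_conv : convex_efun J) (HJ_lsc : lsc_efun J)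
  (x : vec n) (t : 'I_N.+1 -> nat -> R) (v : 'I_N.+1 -> nat -> vec n)
  (vinf : 'I_N.+1 -> vec n) (alpha : 'I_N.+1 -> R)
  (Ht_pos : forall j k, 0 < t j k)
  (Ht_cv : forall j, Un_cv (t j) 0)
  (Hv_cv : forall j, vec_cv (v j) (vinf j))
  (Halpha : forall j, Un_cv (fun k => t j k / t ord0 k) (alpha j))
  (xk : nat -> vec n)
  (Hxk : forall k, xk k = vadd x (vsum (fun j => vscale (t j k) (v j k))))
  (Hx : dom J x)
  (ubar : 'I_N.+1 -> nat -> vec n)
  (Hmin : forall k, lax_minimizer J H (xk k) (fun j => t j k) (fun j => ubar j k)) :
  (forall j, vec_cv (ubar j) vzero) /\
  (forall j, subdiff_nonempty J x -> alpha j = 0 ->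
     vec_cv (fun k => vscale (/ t ord0 k) (ubar j k)) vzero) /\
  (forall j, subdiff_nonempty J x -> alpha j <> 0 ->
     vec_bounded (fun k => vscale (/ t j k) (ubar j k))).
Proof.
case Ejx: (J x) => [jx|]; last by exfalso; apply: Hx.
have hB : forall i M, exists b, forall p, vnorm p <= M -> H i p <= b.
  move=> i M; exact: ball_bound (HH_conv i) M.
pose B i M := proj1_sig (constructive_indefinite_description _ (hB i M)).
have hBs : forall i M p, vnorm p <= M -> H i p <= B i M.
  move=> i M; exact: (proj2_sig (constructive_indefinite_description _ (hB i M))).
have hV : forall i, exists b, forall k, vnorm (v i k) <= b.
  move=> i.
  have [l [_ hl]] := maj_by_pos _ (exist (fun l => Un_cv (fun k => vnorm (vsub (v i k) (vinf i))) l) 0 (Hv_cv i)).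
  exists (l + vnorm (vinf i)) => k.
  have -> : v i k = vadd (vsub (v i k) (vinf i)) (vinf i).
    by apply: functional_extensionality => c; rewrite /vadd /vsub; ring.
  apply: Rle_trans (vnorm_add _ _) _.
  have := hl k; have := Rle_abs (vnorm (vsub (v i k) (vinf i))); lra.
pose V i := proj1_sig (constructive_indefinite_description _ (hV i)).
have hVs : forall i k, vnorm (v i k) <= V i.
  move=> i; exact: (proj2_sig (constructive_indefinite_description _ (hV i))).
have hC : forall i, exists c, forall k, hs (H i) (v i k) <= c.
  move=> i; have [c hc] := hs_upper (HH_conv i) (HH_coer i) (V i).
  by exists c => k; apply: hc; apply: hVs.
pose C i := proj1_sig (constructive_indefinite_description _ (hC i)).
have hCs : forall i k, hs (H i) (v i k) <= C i.
  move=> i; exact: (proj2_sig (constructive_indefinite_description _ (hC i))).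
have hsp := fun i w => hs_spec (HH_conv i) (HH_coer i) w.
have key : forall A L, 0 <= L ->
  (forall y jy, J y = Some jy -> jx - A - L * vnorm (vsub y x) <= jy) ->
  forall (M : 'I_N.+1 -> R), (forall i, 0 <= M i) -> forall k,
  rsum (fun i => (M i - L) * vnorm (ubar i k)) <=
    A + rsum (fun i => t i k * (C i + L * V i + B i (M i))).
  move=> A L hL hmin M hM k.
  pose W := fun i => vscale (t i k) (v i k).
  have eW : lax_obj J H (xk k) (fun j => t j k) W =
      Some (jx + rsum (fun j => t j k * hs (H j) (v j k))).
    rewrite /lax_obj.
    have -> : vsub (xk k) (vsum W) = x.
      rewrite Hxk; apply: functional_extensionality => i; rewrite /vsub /vadd /W; ring.
    rewrite Ejx.
    have -> : (fun j => escale (t j k) (legendre (H j) (vscale (/ t j k) (W j)))) =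
              (fun j => Some (t j k * hs (H j) (v j k))).
      apply: functional_extensionality => j.
      have -> : vscale (/ t j k) (W j) = v j k.
        apply: functional_extensionality => c; rewrite /W /vscale.
        field; have := Ht_pos j k; lra.
      by rewrite (hsp j (v j k)).1.
    by rewrite esum_some.
  have eU : lax_obj J H (xk k) (fun j => t j k) (fun j => ubar j k) =
      eadd (J (vsub (xk k) (vsum (fun j => ubar j k))))
        (Some (rsum (fun j => t j k * hs (H j) (vscale (/ t j k) (ubar j k))))).
    rewrite /lax_obj.
    have -> : (fun j => escale (t j k) (legendre (H j) (vscale (/ t j k) (ubar j k)))) =
              (fun j => Some (t j k * hs (H j) (vscale (/ t j k) (ubar j k)))).
      apply: functional_extensionality => j.
      by rewrite (hsp j _).1.
    by rewrite esum_some.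
  have hm := Hmin k W.
  rewrite eU eW in hm.
  move: hm; case Ey: (J (vsub (xk k) (vsum (fun j => ubar j k)))) => [jy|] //= hm.
  have hy := hmin _ _ Ey.
  have hN1 : vnorm (vsub (vsub (xk k) (vsum (fun j => ubar j k))) x) <=
             rsum (fun i => t i k * V i + vnorm (ubar i k)).
    have -> : vsub (vsub (xk k) (vsum (fun j => ubar j k))) x =
              vsum (fun i => vsub (W i) (ubar i k)).
      rewrite vsum_sub Hxk; apply: functional_extensionality => i.
      rewrite /vsub /vadd /W; ring.
    apply: Rle_trans (vsum_rnorm _) _; apply: rsum_le => i.
    apply: Rle_trans (vnorm_sub _ _) _; apply: Rplus_le_compat_r.
    have htp := Ht_pos i k.
    rewrite /W vnorm_scale Rabs_pos_eq; last lra.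
    apply: Rmult_le_compat_l; [lra | apply: hVs].
  have hS1 : rsum (fun i => M i * vnorm (ubar i k) - t i k * B i (M i)) <=
             rsum (fun i => t i k * hs (H i) (vscale (/ t i k) (ubar i k))).
    apply: rsum_le => i; have htp := Ht_pos i k.
    have hl := hs_lower (HH_conv i) (HH_coer i) (vscale (/ t i k) (ubar i k)) (hM i) (hBs i (M i)).
    rewrite vnorm_scale Rabs_pos_eq in hl; last by apply/Rlt_le/Rinv_0_lt_compat.
    have := Rmult_le_compat_l (t i k) _ _ (Rlt_le _ _ htp) hl.
    have e1 : t i k * (M i * (/ t i k * vnorm (ubar i k)) - B i (M i)) =
              M i * vnorm (ubar i k) - t i k * B i (M i) by field; lra.
    rewrite e1; lra.
  have hS2 : rsum (fun i => t i k * hs (H i) (v i k)) <= rsum (fun i => t i k * C i).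
    apply: rsum_le => i; apply: Rmult_le_compat_l; [apply/Rlt_le/Ht_pos | apply: hCs].
  have E : rsum (fun i => (M i - L) * vnorm (ubar i k)) =
      rsum (fun i => M i * vnorm (ubar i k) - t i k * B i (M i))
      - L * rsum (fun i => t i k * V i + vnorm (ubar i k))
      - rsum (fun i => t i k * C i)
      + rsum (fun i => t i k * (C i + L * V i + B i (M i))).
    rewrite -rsumZ -!rsumB -rsumD; apply: rsum_ext => i /=; ring.
  have hLN := Rmult_le_compat_l L _ _ hL hN1.
  rewrite E; lra.
split.
  move=> j eps heps.
  have [A [L [hA [hL hmin]]]] := J_minor HJ_conv HJ_lsc Ejx.
  pose K0 := 2 * (A + 1) / eps.
  have hK0 : 0 < K0 by rewrite /K0; apply: Rdiv_lt_0_compat; lra.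
  have eK0 : K0 * eps = 2 * (A + 1) by rewrite /K0; field; lra.
  pose M := fun _ : 'I_N.+1 => L + K0.
  have hM : forall i, 0 <= M i by move=> i; rewrite /M; lra.
  have hcv : Un_cv (fun k => rsum (fun i => t i k * (C i + L * V i + B i (M i))))
                   (rsum (fun i => 0 * (C i + L * V i + B i (M i)))).
    apply: rsum_cv => i; apply: CV_mult; [exact: Ht_cv | exact: cv_const].
  rewrite (rsum_ext (G := fun _ => 0)) in hcv; last by move=> i; ring.
  rewrite rsum0 in hcv.
  have [N0 hN0] := hcv 1 Rlt_0_1.
  exists N0 => k hk.
  have := hN0 k hk; rewrite /Rdist Rminus_0_r => h1.
  have h2 := Rle_abs (rsum (fun i => t i k * (C i + L * V i + B i (M i)))).
  have hkey := key A L hL hmin M hM k.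
  have hnn : forall i, 0 <= (M i - L) * vnorm (ubar i k).
    move=> i; apply: Rmult_le_pos; [rewrite /M; lra | exact: vnorm_ge0].
  have hterm := rsum_term_le (F := fun i => (M i - L) * vnorm (ubar i k)) j hnn.
  simpl in hterm.
  have eM : M j - L = K0 by rewrite /M; ring.
  have eMu : (M j - L) * vnorm (ubar j k) = K0 * vnorm (ubar j k) by rewrite eM.
  rewrite /Rdist vsub_zero Rminus_0_r Rabs_pos_eq; last exact: vnorm_ge0.
  have := vnorm_ge0 (ubar j k).
  nra.
split.
  move=> j [p hp] haj eps heps.
  have hmin := J_minor_sub Ejx hp.
  set L := vnorm p.
  have hL : 0 <= L by apply: vnorm_ge0.
  pose E := rsum (fun i => alpha i * Rabs (C i + L * V i + B i L)).
  pose K0 := 2 * (Rabs E + 1) / eps.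
  have hE := Rabs_pos E.
  have hK0 : 0 < K0 by rewrite /K0; apply: Rdiv_lt_0_compat; lra.
  have eK0 : K0 * eps = 2 * (Rabs E + 1) by rewrite /K0; field; lra.
  pose M := fun i => if i == j then L + K0 else L.
  have hM : forall i, 0 <= M i by move=> i; rewrite /M; case: (i == j); lra.
  pose Dj := C j + L * V j + B j (L + K0).
  have hcv : Un_cv (fun k => rsum (fun i => t i k / t ord0 k * Rabs (C i + L * V i + B i L))
                            + t j k / t ord0 k * Rabs Dj)
                   (E + alpha j * Rabs Dj).
    apply: CV_plus; last by apply: CV_mult; [exact: Halpha | exact: cv_const].
    apply: rsum_cv => i; apply: CV_mult; [exact: Halpha | exact: cv_const].
  rewrite haj Rmult_0_l Rplus_0_r in hcv.
  have [N0 hN0] := hcv 1 Rlt_0_1.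
  exists N0 => k hk.
  have := hN0 k hk; rewrite /Rdist => h1.
  have h1' := Rle_abs (rsum (fun i => t i k / t ord0 k * Rabs (C i + L * V i + B i L))
                            + t j k / t ord0 k * Rabs Dj - E).
  have hEa := Rle_abs E.
  have hkey := key 0 L hL hmin M hM k.
  have hnn : forall i, 0 <= (M i - L) * vnorm (ubar i k).
    move=> i; apply: Rmult_le_pos; [rewrite /M; case: (i == j); lra | exact: vnorm_ge0].
  have hterm := rsum_term_le (F := fun i => (M i - L) * vnorm (ubar i k)) j hnn.
  simpl in hterm.
  have eM : M j - L = K0 by rewrite /M eqxx; ring.
  have eMu : (M j - L) * vnorm (ubar j k) = K0 * vnorm (ubar j k) by rewrite eM.
  have hR : rsum (fun i => t i k * (C i + L * V i + B i (M i))) <=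
            rsum (fun i => t i k * Rabs (C i + L * V i + B i L)) + t j k * Rabs Dj.
    apply: Rle_trans (rsum_le (G := fun i => t i k * Rabs (C i + L * V i + B i L)
                     + (if i == j then t i k * Rabs Dj else 0)) _) _.
      move=> i; rewrite /M.
      case: eqP => [->|_].
        have htp := Ht_pos j k.
        have := Rle_abs Dj; have := Rabs_pos (C j + L * V j + B j L).
        rewrite /Dj; nra.
      have htp := Ht_pos i k.
      have := Rle_abs (C i + L * V i + B i L); nra.
    rewrite rsumD (rsum_pred1 (fun i => t i k * Rabs Dj)); lra.
  have t1p := Ht_pos ord0 k.
  have eR : (rsum (fun i => t i k * Rabs (C i + L * V i + B i L)) + t j k * Rabs Dj) * / t ord0 k
            = rsum (fun i => t i k / t ord0 k * Rabs (C i + L * V i + B i L))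
              + t j k / t ord0 k * Rabs Dj.
    rewrite Rmult_plus_distr_r -rsumZr; congr (_ + _).
      apply: rsum_ext => i /=; rewrite /Rdiv; ring.
    rewrite /Rdiv; ring.
  have hit : 0 < / t ord0 k by apply: Rinv_0_lt_compat.
  rewrite /Rdist vsub_zero Rminus_0_r Rabs_pos_eq; last exact: vnorm_ge0.
  rewrite vnorm_scale Rabs_pos_eq; last lra.
  have hu := vnorm_ge0 (ubar j k).
  set X := rsum (fun i => t i k * Rabs (C i + L * V i + B i L)) + t j k * Rabs Dj in hR eR.
  set Y := rsum (fun i => t i k / t ord0 k * Rabs (C i + L * V i + B i L))
           + t j k / t ord0 k * Rabs Dj in eR h1 h1'.
  have h3 : K0 * vnorm (ubar j k) * / t ord0 k <= X * / t ord0 k.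
    apply: Rmult_le_compat_r; lra.
  rewrite eR in h3.
  nra.
move=> j [p hp] haj.
have hmin := J_minor_sub Ejx hp.
set L := vnorm p.
have hL : 0 <= L by apply: vnorm_ge0.
pose M := fun _ : 'I_N.+1 => L + 1.
have hM : forall i, 0 <= M i by move=> i; rewrite /M; lra.
pose S k := rsum (fun i => t i k / t ord0 k * Rabs (C i + L * V i + B i (M i))).
have hS : Un_cv S (rsum (fun i => alpha i * Rabs (C i + L * V i + B i (M i)))).
  apply: rsum_cv => i; apply: CV_mult; [exact: Halpha | exact: cv_const].
have [bS [_ hbS]] := maj_by_pos _ (exist _ _ hS).
have [bI hbI] := inv_bounded (Halpha j) haj
  (fun k => Rgt_not_eq _ _ (Rdiv_lt_0_compat _ _ (Ht_pos j k) (Ht_pos ord0 k))).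
exists (bS * bI) => k.
have hkey := key 0 L hL hmin M hM k.
have hnn : forall i, 0 <= (M i - L) * vnorm (ubar i k).
  move=> i; apply: Rmult_le_pos; [rewrite /M; lra | exact: vnorm_ge0].
have hterm := rsum_term_le (F := fun i => (M i - L) * vnorm (ubar i k)) j hnn.
simpl in hterm.
have eM : M j - L = 1 by rewrite /M; ring.
have eMu : (M j - L) * vnorm (ubar j k) = vnorm (ubar j k) by rewrite eM; ring.
have hR : rsum (fun i => t i k * (C i + L * V i + B i (M i))) <=
          rsum (fun i => t i k * Rabs (C i + L * V i + B i (M i))).
  apply: rsum_le => i; have := Rle_abs (C i + L * V i + B i (M i)); have := Ht_pos i k; nra.
have tjp := Ht_pos j k; have t1p := Ht_pos ord0 k.
have eR : rsum (fun i => t i k * Rabs (C i + L * V i + B i (M i))) * / t j k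
          = S k * / (t j k / t ord0 k).
  rewrite /S -!rsumZr; apply: rsum_ext => i /=; field; lra.
have hit : 0 < / t j k by apply: Rinv_0_lt_compat.
rewrite vnorm_scale Rabs_pos_eq; last lra.
have h3 : vnorm (ubar j k) * / t j k <=
          rsum (fun i => t i k * Rabs (C i + L * V i + B i (M i))) * / t j k.
  apply: Rmult_le_compat_r; lra.
rewrite eR in h3.
have h4 := Rle_abs (S k * / (t j k / t ord0 k)).
rewrite Rabs_mult in h4.
have h5 : Rabs (S k) * Rabs (/ (t j k / t ord0 k)) <= bS * bI.
  apply: Rmult_le_compat; [apply: Rabs_pos | apply: Rabs_pos | apply: hbS | apply: hbI].
lra.
Qed.
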